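(* Let $\mathcal{G}$ be a grounded graph class. Then every level-$\mathcal{G}$ weighted graph has a sorted $\mathcal{G}$-safe edge elimination scheme if and only if $\mathcal{G}$ is sandwich monotone.
   Context: All graphs are finite, simple and undirected. A ($k$-)weighted graph is a pair $(G,\omega)$ with $\omega:E(G)\to\{1,\dots,k\}$ surjective for some positive integer $k$. For $1\le i\le k+1$, the $i$-th level graph of $(G,\omega)$ is obtained from $G$ by removing all edges $e$ with $\omega(e)<i$; $(G,\omega)$ is level-$\mathcal{G}$ if all its level graphs belong to $\mathcal{G}$. For $G\in\mathcal{G}$, a set $F\subseteq E(G)$ (resp. edge $e$) is $\mathcal{G}$-safe if $G-F\in\mathcal{G}$ (resp. $G-e\in\mathcal{G}$). $\mathcal{G}$ is grounded if for every $G\in\mathcal{G}$, $E(G)$ is $\mathcal{G}$-safe. $\mathcal{G}$ is sandwich monotone if for each $G\in\mathcal{G}$ and each non-empty $\mathcal{G}$-safe set $F\subseteq E(G)$ there is a $\mathcal{G}$-safe edge in $F$. For an edge ordering $\tau=(e_1,\dots,e_m)$ of $G$ let $G^i_\tau=G-\{e_1,\dots,e_i\}$; for $G\in\mathcal{G}$, a $\mathcal{G}$-safe edge elimination scheme is an edge ordering with $G^i_\tau\in\mathcal{G}$ for all $i\in\{1,\dots,m\}$, and it is sorted (for a weighted graph $(G,\omega)$) if $i<j$ implies $\omega(e_i)\le\omega(e_j)$. *)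

(* Defs.v *)
From mathcomp Require Import all_boot.
Set Implicit Arguments. Unset Strict Implicit. Unset Printing Implicit Defensive.

(* A finite simple undirected graph with vertex set the finite type T is
   given by its edge set E : {set {set T}}, every edge being a 2-subset of T. *)
Definition simple_graph (T : finType) (E : {set {set T}}) : Prop :=
  forall e, e \in E -> #|e| = 2.

Definition graph_class := forall T : finType, {set {set T}} -> Prop.

Definition safe_set (C : graph_class) (T : finType) (E F : {set {set T}}) : Prop :=
  C T (E :\: F).

Definition grounded (C : graph_class) : Prop :=
  forall (T : finType) (E : {set {set T}}),
    simple_graph E -> C T E -> safe_set C E E.

Definition sandwich_monotone (C : graph_class) : Prop :=
  forall (T : finType) (E : {set {set T}}),
    simple_graph E -> C T E ->
    forall F : {set {set T}}, F \subset E -> F != set0 -> safe_set C E F ->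
      exists2 e, e \in F & safe_set C E [set e].

Definition weighted_graph (T : finType) (E : {set {set T}}) (w : {set T} -> nat)
    (k : nat) : Prop :=
  [/\ simple_graph E, 0 < k,
      forall e, e \in E -> 1 <= w e <= k
    & forall i, 1 <= i <= k -> exists2 e, e \in E & w e = i].

Definition level_graph (T : finType) (E : {set {set T}}) (w : {set T} -> nat)
    (i : nat) : {set {set T}} :=
  [set e in E | i <= w e].

Definition level_class (C : graph_class) (T : finType) (E : {set {set T}})
    (w : {set T} -> nat) (k : nat) : Prop :=
  forall i, 1 <= i <= k.+1 -> C T (level_graph E w i).

Definition edge_ordering (T : finType) (E : {set {set T}}) (s : seq {set T}) : Prop :=
  perm_eq s (enum E).

Definition remove_prefix (T : finType) (E : {set {set T}}) (s : seq {set T})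
    (i : nat) : {set {set T}} :=
  E :\: [set e in take i s].

Definition safe_elimination_scheme (C : graph_class) (T : finType)
    (E : {set {set T}}) (s : seq {set T}) : Prop :=
  edge_ordering E s /\
  forall i, 1 <= i <= size s -> C T (remove_prefix E s i).

Definition sorted_ordering (T : finType) (w : {set T} -> nat) (s : seq {set T}) : Prop :=
  forall i j, i < j < size s -> w (nth set0 s i) <= w (nth set0 s j).

(* Main.v *)
Require Import Defs.
From mathcomp Require Import all_boot zify.

Lemma back_ind (C : graph_class) (sm : sandwich_monotone C) (T : finType)
  (w : {set T} -> nat) : forall n (E : {set {set T}}), #|E| <= n ->
  simple_graph E -> (forall i, C T (level_graph E w i)) ->
  exists s, safe_elimination_scheme C E s /\ sorted_ordering w s.
Proof.
elim=> [|n IH] E hn sE hl.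
  have E0 : E = set0 by apply/eqP; rewrite -cards_eq0 -leqn0.
  exists [::]; split; last by move=> i j /= /andP[_]; rewrite ltn0.
  split; first by rewrite /edge_ordering E0 enum_set0.
  by move=> i /= /andP[a b]; move: (leq_trans a b).
case: (set_0Vmem E) => [E0|[e0 e0E]].
  apply: (IH E) => //; by rewrite E0 cards0.
pose m := w [arg min_(e < e0 in E) w e].
have mmin : forall e, e \in E -> m <= w e.
  rewrite /m; case: arg_minnP => // x _ H; exact: H.
have mE : [arg min_(e < e0 in E) w e] \in E by case: arg_minnP.
pose F := [set e in E | w e == m].
have FE : F \subset E by apply/subsetP=> x; rewrite inE => /andP[].
have Fne : F != set0.
  by apply/set0Pn; exists [arg min_(e < e0 in E) w e]; rewrite inE mE eqxx.
have CE : C T E.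
  have -> : E = level_graph E w 0 by apply/setP=> x; rewrite inE andbT.
  exact: hl.
have sF : safe_set C E F.
  rewrite /safe_set.
  have -> : E :\: F = level_graph E w m.+1.
    apply/setP=> x; rewrite !inE; case xE: (x \in E) => //=; rewrite andbT.
    by have := mmin x xE; rewrite ltn_neqAle eq_sym => ->; rewrite andbT.
  exact: hl.
have [e eF se] := sm T E sE CE F FE Fne sF.
have eE : e \in E by move: eF; rewrite inE => /andP[].
have we : w e = m by move: eF; rewrite inE => /andP[_ /eqP].
pose E' := E :\ e.
have hn' : #|E'| <= n.
  by move: hn; rewrite (cardsD1 e E) eE add1n ltnS.
have sE' : simple_graph E' by move=> x; rewrite !inE => /andP[_ /sE].
have hl' : forall i, C T (level_graph E' w i).
  move=> i; case: (leqP i m) => him.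
    have -> : level_graph E' w i = E :\: [set e].
      apply/setP=> x; rewrite !inE; case: (x == e) => //=.
      case xE: (x \in E) => //=; exact: leq_trans him (mmin x xE).
    exact: se.
  have -> : level_graph E' w i = level_graph E w i.
    apply/setP=> x; rewrite !inE; case: eqP => //= ->.
    by rewrite eE /= leqNgt we him.
  exact: hl.
have [s' [[ps' hs'] so']] := IH E' hn' sE' hl'.
have ms' : forall x, (x \in s') = (x \in E') by move=> x; rewrite (perm_mem ps') mem_enum.
exists (e :: s'); split; first split.
- apply: uniq_perm; last first.
  + by move=> x; rewrite in_cons ms' mem_enum !inE; case: eqP => // ->.
  + exact: enum_uniq.
  + rewrite /= (perm_uniq ps') enum_uniq andbT ms' !inE eqxx //.
- case=> [|[|i]] /= hi //.
    have -> : remove_prefix E (e :: s') 1 = E :\: [set e].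
      by apply/setP=> x; rewrite /remove_prefix /= !inE take0 orbF.
    exact: se.
  have -> : remove_prefix E (e :: s') i.+2 = remove_prefix E' s' i.+1.
    apply/setP=> x; rewrite /remove_prefix /= !inE.
    by case: (x == e); rewrite ?andbF //= ?andbT.
  by apply: hs'; move: hi; rewrite /= !ltnS.
- move=> i j; case: i => [|i]; case: j => [|j] //=; rewrite ?ltnS.
    move=> hj.
    have : nth set0 s' j \in E' by rewrite -ms' mem_nth.
    by rewrite !inE => /andP[_ /mmin]; rewrite we.
  by move=> h; apply: so'.
Qed.

Theorem proposition3p1 (C : graph_class) :
  grounded C ->
  ((forall (T : finType) (E : {set {set T}}) (w : {set T} -> nat) (k : nat),
      weighted_graph E w k -> level_class C E w k ->
      exists s : seq {set T},
        safe_elimination_scheme C E s /\ sorted_ordering w s)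
   <-> sandwich_monotone C).
Proof.
move=> gr; split; last first.
  move=> sm T E w k [sE k0 wr _] lc.
  apply: (@back_ind C sm T w #|E| E (leqnn _) sE) => i.
  case: (leqP i k.+1) => hi.
    case: i hi => [|i] hi.
      have -> : level_graph E w 0 = level_graph E w 1.
        apply/setP=> x; rewrite !inE; case xE: (x \in E) => //=.
        by case/andP: (wr x xE).
      by apply: lc; rewrite leqnn ltnS.
    by apply: lc.
  have -> : level_graph E w i = level_graph E w k.+1.
    apply/setP=> x; rewrite !inE; case xE: (x \in E) => //=.
    case/andP: (wr x xE) => _ h.
    apply/idP/idP => h2; exfalso; move: h h2 hi; clear; move=> h h2 hi; lia.
  by apply: lc; rewrite leqnn andbT.
move=> H T E sE CE F FE Fne sF.
pose w := fun e : {set T} => if e \in F then 1 else 2.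
pose k := if E :\: F == set0 then 1 else 2.
have lg : forall i, C T (level_graph E w i).
  move=> i; case: i => [|[|[|i]]].
  - have -> : level_graph E w 0 = E by apply/setP=> x; rewrite !inE andbT.
    exact: CE.
  - have -> : level_graph E w 1 = E.
      by apply/setP=> x; rewrite !inE /w; case: (x \in F); rewrite andbT.
    exact: CE.
  - have -> : level_graph E w 2 = E :\: F.
      by apply/setP=> x; rewrite !inE /w andbC; case: (x \in F).
    exact: sF.
  - have -> : level_graph E w i.+3 = E :\: E.
      apply/setP=> x; rewrite !inE /w; case: (x \in F); case: (x \in E) => //.
    by apply: gr.
have [f fF] := set0Pn _ Fne.
have fE : f \in E by apply: (subsetP FE).
have [s [[ps hs] so]] : exists s : seq {set T},
    safe_elimination_scheme C E s /\ sorted_ordering w s.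
  apply: (H T E w k) => [|i _]; last exact: lg.
  split => //; first by rewrite /k; case: ifP.
  - move=> e eE; rewrite /w /k; case: ifP => eF; first by case: ifP.
    by case: ifP => // /eqP/setP/(_ e); rewrite !inE eF eE.
  - move=> i; rewrite /k; case: ifP => [_|/set0Pn [g gEF]].
      by case: i => [|[|]] //= _; exists f => //; rewrite /w fF.
    case: i => [|[|[|]]] //= _.
      by exists f => //; rewrite /w fF.
    move: gEF; rewrite inE => /andP[gF gE].
    by exists g => //; rewrite /w (negbTE gF).
have fs : f \in s by rewrite (perm_mem ps) mem_enum.
case: s ps hs so fs => [|e1 s'] // ps hs so fs.
have e1F : e1 \in F.
  apply/negPn/negP => ne1.
  have hj := fs; rewrite -index_mem in hj.
  move: (nth_index set0 fs) => nf.
  move: hj nf; case: (index f (e1 :: s')) => [|j] hj nf.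
    by move: nf => /= nf; rewrite nf fF in ne1.
  have := so 0 j.+1; rewrite hj /= => /(_ isT).
  by rewrite /= in nf; rewrite nf /w fF (negbTE ne1).
exists e1 => //.
have := hs 1; rewrite /= ltnS leq0n => /(_ isT).
have -> : remove_prefix E (e1 :: s') 1 = E :\: [set e1].
  by apply/setP=> x; rewrite /remove_prefix /= !inE take0 orbF.
by [].
Qed.
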